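(* Let $k\ge2$, $d=2k+1$, and let $u,v$ be smooth functions of $(x^1,\dots,x^{d})$ satisfying $$u_1+v_2=\sum_{s=2}^{k}(u_{2s-1}v_{2s}-u_{2s}v_{2s-1}),\qquad u_2+v_3=\sum_{s=2}^{k}(u_{2s}v_{2s+1}-u_{2s+1}v_{2s}).$$ For a parameter $\lambda$ set $\alpha_{2s-1}=1$, $\alpha_{2s}=\lambda$, and $$X=\partial_2+\lambda\partial_3-\sum_{i=3}^{2k}\alpha_i(u_i\partial_{i+1}-u_{i+1}\partial_i),\qquad Y=\partial_1+\lambda\partial_2+\sum_{i=3}^{2k}\alpha_i(v_i\partial_{i+1}-v_{i+1}\partial_i).$$ Then $[X,Y]=0$ for all $\lambda$.
   Context: $\partial_i=\partial/\partial x^i$, $u_i=\partial u/\partial x^i$, $v_i=\partial v/\partial x^i$; $[X,Y]$ is the Lie bracket of vector fields on the space of $x$'s. *)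

(* Defs.v *)
From Stdlib Require Import Reals Lra Lia List ClassicalEpsilon.
Open Scope R_scope.

(* Points of R^d are represented as x : nat -> R, coordinates x 1, ..., x d.
   Functions on R^d are functions (nat -> R) -> R that depend only on the
   coordinates 1..d. *)
Definition point := nat -> R.

Definition depends_only (d : nat) (f : point -> R) : Prop :=
  forall x y : point, (forall i, (1 <= i <= d)%nat -> x i = y i) -> f x = f y.

Definition upd (x : point) (i : nat) (t : R) : point :=
  fun j => if Nat.eqb j i then x i + t else x j.

(* partial derivative d f / d x^i (chosen classically; meaningful when it exists) *)
Definition pd (i : nat) (f : point -> R) : point -> R :=
  fun x => epsilon (inhabits 0%R)
             (fun l => derivable_pt_lim (fun t => f (upd x i t)) 0 l).

Definition pds (l : list nat) (f : point -> R) : point -> R :=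
  fold_right pd f l.

Definition cont_d (d : nat) (g : point -> R) : Prop :=
  forall (x : point) (eps : R), 0 < eps -> exists delta, 0 < delta /\
    forall y : point, (forall i, (1 <= i <= d)%nat -> Rabs (y i - x i) < delta) ->
      Rabs (g y - g x) < eps.

Definition smooth (d : nat) (f : point -> R) : Prop :=
  depends_only d f /\
  forall l : list nat, Forall (fun i => (1 <= i <= d)%nat) l ->
    cont_d d (pds l f) /\
    forall (i : nat) (x : point), (1 <= i <= d)%nat ->
      exists D, derivable_pt_lim (fun t => pds l f (upd x i t)) 0 D.

Fixpoint rsum (m n : nat) (F : nat -> R) : R :=
  match n with
  | O => 0
  | S n' => F m + rsum (S m) n' F
  end.

Definition sum_from_to (a b : nat) (F : nat -> R) : R := rsum a (S b - a) F.

Definition delta (i j : nat) : R := if Nat.eqb i j then 1 else 0.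

Definition vfield := nat -> point -> R.

Definition vapp (d : nat) (X : vfield) (f : point -> R) : point -> R :=
  fun x => sum_from_to 1 d (fun i => X i x * pd i f x).

Definition bracket (d : nat) (X Y : vfield) : vfield :=
  fun j x => vapp d X (Y j) x - vapp d Y (X j) x.

Definition alpha (lam : R) (i : nat) : R := if Nat.odd i then 1 else lam.

Definition Xf (k : nat) (u : point -> R) (lam : R) : vfield :=
  fun j x => delta j 2 + lam * delta j 3
    - sum_from_to 3 (2 * k) (fun i =>
        alpha lam i * (pd i u x * delta j (S i) - pd (S i) u x * delta j i)).

Definition Yf (k : nat) (v : point -> R) (lam : R) : vfield :=
  fun j x => delta j 1 + lam * delta j 2
    + sum_from_to 3 (2 * k) (fun i =>
        alpha lam i * (pd i v x * delta j (S i) - pd (S i) v x * delta j i)).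

(* Main.v *)
Require Import Defs.
From Coquelicot Require Import Coquelicot.
From Stdlib Require Import Reals Lra Lia List ClassicalEpsilon FunctionalExtensionality.
Open Scope R_scope.

Lemma pd_eq i f x D : derivable_pt_lim (fun t => f (upd x i t)) 0 D -> pd i f x = D.
Proof.
  intros H. unfold pd.
  assert (Hs := epsilon_spec (inhabits 0) (fun l => derivable_pt_lim (fun t => f (upd x i t)) 0 l) (ex_intro _ D H)).
  exact (uniqueness_limite _ _ _ _ Hs H).
Qed.

Lemma pds_der d f l i x : smooth d f -> Forall (fun i => (1<=i<=d)%nat) l -> (1<=i<=d)%nat ->
  derivable_pt_lim (fun t => pds l f (upd x i t)) 0 (pd i (pds l f) x).
Proof. intros [_ Hs] Hl Hi. destruct (proj2 (Hs l Hl) i x Hi) as [D HD].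
  rewrite (pd_eq _ _ _ _ HD). exact HD. Qed.

Lemma dpd d f m q x : smooth d f -> (1<=m<=d)%nat -> (1<=q<=d)%nat ->
  derivable_pt_lim (fun t => pd m f (upd x q t)) 0 (pd q (pd m f) x).
Proof. intros Hs Hm Hq. exact (pds_der d f (m :: nil) q x Hs (Forall_cons _ Hm (Forall_nil _)) Hq). Qed.

Lemma der_eq f l l' : derivable_pt_lim f 0 l -> l = l' -> derivable_pt_lim f 0 l'.
Proof. intros H ->; exact H. Qed.
Lemma dplus f g a b : derivable_pt_lim f 0 a -> derivable_pt_lim g 0 b -> derivable_pt_lim (fun t => f t + g t) 0 (a+b).
Proof. intros; apply (derivable_pt_lim_plus f g); auto. Qed.
Lemma dminus f g a b : derivable_pt_lim f 0 a -> derivable_pt_lim g 0 b -> derivable_pt_lim (fun t => f t - g t) 0 (a-b).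
Proof. intros; apply (derivable_pt_lim_minus f g); auto. Qed.
Lemma dmult f g a b : derivable_pt_lim f 0 a -> derivable_pt_lim g 0 b -> derivable_pt_lim (fun t => f t * g t) 0 (a * g 0 + f 0 * b).
Proof. intros; apply (derivable_pt_lim_mult f g); auto. Qed.
Lemma dconst c : derivable_pt_lim (fun _ => c) 0 0.
Proof. exact (derivable_pt_lim_const c 0). Qed.

Lemma rsum_ext a n F G : (forall i, (a <= i < a + n)%nat -> F i = G i) -> rsum a n F = rsum a n G.
Proof. revert a; induction n; intros a H; simpl; [reflexivity|]. rewrite H by lia.
  rewrite (IHn (S a)) by (intros; apply H; lia). reflexivity. Qed.
Lemma rsum_plus a n F G : rsum a n (fun i => F i + G i) = rsum a n F + rsum a n G.
Proof. revert a; induction n; intros a; simpl; [ring|]. rewrite IHn; ring. Qed.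
Lemma rsum_minus a n F G : rsum a n (fun i => F i - G i) = rsum a n F - rsum a n G.
Proof. revert a; induction n; intros a; simpl; [ring|]. rewrite IHn; ring. Qed.
Lemma rsum_scal a n c F : rsum a n (fun i => c * F i) = c * rsum a n F.
Proof. revert a; induction n; intros a; simpl; [ring|]. rewrite IHn; ring. Qed.
Lemma rsum_zero a n : rsum a n (fun _ => 0) = 0.
Proof. revert a; induction n; intros a; simpl; [ring|]. rewrite IHn; ring. Qed.
Lemma rsum_swap a n b p F : rsum a n (fun i => rsum b p (fun m => F i m)) = rsum b p (fun m => rsum a n (fun i => F i m)).
Proof. revert a; induction n; intros a; simpl. symmetry; apply rsum_zero.
  rewrite IHn. rewrite <- rsum_plus. reflexivity. Qed.
Lemma rsum_delta_out a n q F : (q < a)%nat -> rsum a n (fun i => delta i q * F i) = 0.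
Proof. revert a; induction n; intros a H; simpl; [ring|]. rewrite IHn by lia.
  unfold delta. rewrite (proj2 (Nat.eqb_neq a q)) by lia. ring. Qed.
Lemma rsum_delta a n q F : (a <= q < a+n)%nat -> rsum a n (fun i => delta i q * F i) = F q.
Proof. revert a; induction n; intros a H; simpl; [lia|].
  destruct (Nat.eq_dec a q) as [->|Hne].
  - rewrite rsum_delta_out by lia. unfold delta; rewrite Nat.eqb_refl; ring.
  - rewrite IHn by lia. unfold delta. rewrite (proj2 (Nat.eqb_neq a q)) by lia. ring. Qed.

Lemma drsum a n (F : nat -> R -> R) D : (forall m, (a <= m < a+n)%nat -> derivable_pt_lim (F m) 0 (D m)) ->
  derivable_pt_lim (fun t => rsum a n (fun m => F m t)) 0 (rsum a n D).
Proof. revert a; induction n; intros a H; simpl. apply dconst.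
  apply dplus. apply H; lia. apply IHn. intros; apply H; lia. Qed.

Lemma odd_facts c : Nat.odd (2*c+1) = true /\ Nat.odd (2*c+2) = false.
Proof. split. apply Nat.odd_spec; exists c; lia.
  rewrite <- Nat.negb_even. replace (2*c+2)%nat with (2*(c+1))%nat by lia.
  rewrite Nat.even_mul. reflexivity. Qed.

Lemma rsum_oddeven lam g c n : rsum (2*c+1) (2*n) (fun m => alpha lam m * g m)
  = rsum (c+1) n (fun s => g (2*s-1)%nat) + lam * rsum (c+1) n (fun s => g (2*s)%nat).
Proof. revert c; induction n; intros c. simpl; ring.
  replace (2 * S n)%nat with (S (S (2*n))) by lia. cbn [rsum].
  replace (S (S (2*c+1))) with (2*(c+1)+1)%nat by lia. idtac.
  rewrite IHn. replace (S (c+1)) with (c+1+1)%nat by lia.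
  replace (2*(c+1)-1)%nat with (2*c+1)%nat by lia.
  replace (S (2*c+1)) with (2*c+2)%nat by lia.
  replace (2*(c+1))%nat with (2*c+2)%nat by lia.
  destruct (odd_facts c) as [E1 E2]. unfold alpha. rewrite E1, E2. ring. Qed.

Lemma sum_oddeven lam g k : (1 <= k)%nat -> sum_from_to 3 (2*k) (fun m => alpha lam m * g m)
  = sum_from_to 2 k (fun s => g (2*s-1)%nat) + lam * sum_from_to 2 k (fun s => g (2*s)%nat).
Proof. intros Hk. unfold sum_from_to.
  replace (S (2*k) - 3)%nat with (2*(k-1))%nat by lia. replace (S k - 2)%nat with (k-1)%nat by lia.
  exact (rsum_oddeven lam g 1 (k-1)). Qed.
Definition P2 (x : point) i m a b : point :=
  fun j => if Nat.eqb j i then x i + a else if Nat.eqb j m then x m + b else x j.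

Lemma P2_i x i m a b t : i <> m -> upd (P2 x i m a b) i t = P2 x i m (a+t) b.
Proof. intro H. apply functional_extensionality; intro j. unfold upd, P2.
  destruct (Nat.eqb j i) eqn:E; [rewrite Nat.eqb_refl; ring|reflexivity]. Qed.

Lemma P2_m x i m a b t : i <> m -> upd (P2 x i m a b) m t = P2 x i m a (b+t).
Proof. intro H. apply functional_extensionality; intro j. unfold upd, P2.
  rewrite (proj2 (Nat.eqb_neq m i)) by auto. rewrite Nat.eqb_refl.
  destruct (Nat.eqb j m) eqn:E.
  - apply Nat.eqb_eq in E; subst. rewrite (proj2 (Nat.eqb_neq m i)) by auto. ring.
  - reflexivity. Qed.

Lemma P2_0 x i m : P2 x i m 0 0 = x.
Proof. apply functional_extensionality; intro j. unfold P2.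
  destruct (Nat.eqb j i) eqn:E; [apply Nat.eqb_eq in E; subst; ring|].
  destruct (Nat.eqb j m) eqn:E2; [apply Nat.eqb_eq in E2; subst; ring|reflexivity]. Qed.

Lemma shift_der g a l : derivable_pt_lim (fun t => g (a+t)) 0 l -> derivable_pt_lim g a l.
Proof. intros H eps Heps. destruct (H eps Heps) as [del Hd]. exists del. intros h Hh0 Hh.
  specialize (Hd h Hh0 Hh). cbv beta in Hd.
  assert (E1: a + (0+h) = a+h) by ring. assert (E2: a+0 = a) by ring.
  rewrite E1, E2 in Hd. exact Hd. Qed.

Section Sch.
Variables (d : nat) (f : point -> R) (x : point) (i m : nat).
Hypothesis (Hf : smooth d f) (Hi : (1<=i<=d)%nat) (Hm : (1<=m<=d)%nat) (Him : i <> m).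

Lemma Dg1 l a b : List.Forall (fun i => (1<=i<=d)%nat) l ->
  is_derive (fun z => pds l f (P2 x i m z b)) a (pd i (pds l f) (P2 x i m a b)).
Proof. intros Hl. apply is_derive_Reals. apply shift_der.
  assert (H := pds_der d f l i (P2 x i m a b) Hf Hl Hi).
  replace (fun t => pds l f (P2 x i m (a + t) b)) with (fun t => pds l f (upd (P2 x i m a b) i t)).
  exact H. apply functional_extensionality; intro t. rewrite P2_i by auto. reflexivity. Qed.

Lemma Dg2 l a b : List.Forall (fun i => (1<=i<=d)%nat) l ->
  is_derive (fun z => pds l f (P2 x i m a z)) b (pd m (pds l f) (P2 x i m a b)).
Proof. intros Hl. apply is_derive_Reals. apply shift_der.
  assert (H := pds_der d f l m (P2 x i m a b) Hf Hl Hm).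
  replace (fun t => pds l f (P2 x i m a (b + t))) with (fun t => pds l f (upd (P2 x i m a b) m t)).
  exact H. apply functional_extensionality; intro t. rewrite P2_m by auto. reflexivity. Qed.

Let F := fun a b => f (P2 x i m a b).
Let L0 : List.Forall (fun i => (1<=i<=d)%nat) nil := List.Forall_nil _.
Let Lm : List.Forall (fun i => (1<=i<=d)%nat) (m :: nil) := List.Forall_cons _ Hm L0.
Let Li : List.Forall (fun i => (1<=i<=d)%nat) (i :: nil) := List.Forall_cons _ Hi L0.

Lemma E_m z v : Derive (fun t => F z t) v = pd m f (P2 x i m z v).
Proof. apply is_derive_unique. exact (Dg2 nil z v L0). Qed.
Lemma E_i z u : Derive (fun t => F t z) u = pd i f (P2 x i m u z).
Proof. apply is_derive_unique. exact (Dg1 nil u z L0). Qed.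
Lemma E_im u v : Derive (fun z => Derive (fun t => F z t) v) u = pd i (pd m f) (P2 x i m u v).
Proof. rewrite (Derive_ext _ (fun z => pd m f (P2 x i m z v))) by (intro; apply E_m).
  apply is_derive_unique. exact (Dg1 (m::nil) u v Lm). Qed.
Lemma E_mi u v : Derive (fun z => Derive (fun t => F t z) u) v = pd m (pd i f) (P2 x i m u v).
Proof. rewrite (Derive_ext _ (fun z => pd i f (P2 x i m u z))) by (intro; apply E_i).
  apply is_derive_unique. exact (Dg2 (i::nil) u v Li). Qed.

Lemma cont2 l : List.Forall (fun i => (1<=i<=d)%nat) l ->
  continuity_2d_pt (fun u v => pds l f (P2 x i m u v)) 0 0.
Proof. intros Hl eps. destruct Hf as [_ Hs]. destruct (Hs l Hl) as [Hc _].
  destruct (Hc x eps (cond_pos eps)) as [del [Hdel Hd]].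
  exists (mkposreal del Hdel). intros u v Hu Hv. simpl in Hu, Hv.
  rewrite P2_0. apply Hd. intros j _. unfold P2.
  rewrite ?Rminus_0_r in Hu, Hv.
  destruct (Nat.eqb j i) eqn:E1. apply Nat.eqb_eq in E1; subst j. replace (x i + u - x i) with u by ring; exact Hu.
  destruct (Nat.eqb j m) eqn:E2. apply Nat.eqb_eq in E2; subst j. replace (x m + v - x m) with v by ring; exact Hv.
  replace (x j - x j) with 0 by ring. rewrite Rabs_R0. exact Hdel. Qed.

Lemma schwarz_aux : pd i (pd m f) x = pd m (pd i f) x.
Proof.
  assert (HS := Schwarz F 0 0).
  rewrite E_im, E_mi, P2_0 in HS. apply HS.
  - exists (mkposreal 1 Rlt_0_1). intros u v _ _. split; [|split; [|split]].
    + exists (pd i f (P2 x i m u v)). exact (Dg1 nil u v L0).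
    + exists (pd m f (P2 x i m u v)). exact (Dg2 nil u v L0).
    + apply (ex_derive_ext (fun z => pd m f (P2 x i m z v))). intro; symmetry; apply E_m.
      exists (pd i (pd m f) (P2 x i m u v)). exact (Dg1 (m::nil) u v Lm).
    + apply (ex_derive_ext (fun z => pd i f (P2 x i m u z))). intro; symmetry; apply E_i.
      exists (pd m (pd i f) (P2 x i m u v)). exact (Dg2 (i::nil) u v Li).
  - intros eps. destruct (cont2 (i::m::nil) (List.Forall_cons _ Hi Lm) eps) as [del Hd].
    exists del. intros u v Hu Hv. rewrite !E_im. exact (Hd u v Hu Hv).
  - intros eps. destruct (cont2 (m::i::nil) (List.Forall_cons _ Hm Li) eps) as [del Hd].
    exists del. intros u v Hu Hv. rewrite !E_mi. exact (Hd u v Hu Hv).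
Qed.
End Sch.

Lemma schwarz_pd d f i m x : smooth d f -> (1<=i<=d)%nat -> (1<=m<=d)%nat ->
  pd i (pd m f) x = pd m (pd i f) x.
Proof. intros Hf Hi Hm. destruct (Nat.eq_dec i m) as [->|H]. reflexivity.
  exact (schwarz_aux d f x i m Hf Hi Hm H). Qed.
Lemma LA d k f lam j C s x i : smooth d f -> d = (2*k+1)%nat -> (1<=i<=d)%nat ->
 pd i (fun y => C + s * sum_from_to 3 (2*k) (fun m => alpha lam m * (pd m f y * delta j (S m) - pd (S m) f y * delta j m))) x
 = s * sum_from_to 3 (2*k) (fun m => alpha lam m * (pd i (pd m f) x * delta j (S m) - pd i (pd (S m) f) x * delta j m)).
Proof. intros Hf Hd Hi. apply pd_eq. unfold sum_from_to.
  eapply der_eq. apply dplus. apply dconst. apply dmult. apply dconst.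
  apply (drsum _ _ _ (fun m => alpha lam m * (pd i (pd m f) x * delta j (S m) - pd i (pd (S m) f) x * delta j m))).
  intros m Hm. eapply der_eq. apply dmult. apply dconst. apply dminus; apply dmult; try apply dconst.
  apply (dpd d); [exact Hf|lia|lia]. apply (dpd d); [exact Hf|lia|lia].
  cbv beta; ring. cbv beta; ring. Qed.
Lemma rsum_mult_r a n G c : rsum a n (fun m => G m * c) = rsum a n G * c.
Proof. revert a; induction n; intros a; simpl; [ring|]. rewrite IHn; ring. Qed.

Lemma LC k lam s a b A B F : (1<=a<=2*k+1)%nat -> (1<=b<=2*k+1)%nat ->
 sum_from_to 1 (2*k+1) (fun i => (delta i a + lam * delta i b + s * sum_from_to 3 (2*k) (fun m => alpha lam m * (A m * delta i (S m) - B m * delta i m))) * F i)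
 = F a + lam * F b + s * sum_from_to 3 (2*k) (fun m => alpha lam m * (A m * F (S m) - B m * F m)).
Proof. intros Ha Hb. unfold sum_from_to.
  set (N := (S (2*k+1) - 1)%nat). set (n := (S (2*k) - 3)%nat).
  rewrite (rsum_ext 1 N _ (fun i => delta i a * F i + lam * (delta i b * F i) + s * rsum 3 n (fun m => alpha lam m * A m * (delta i (S m) * F i) - alpha lam m * B m * (delta i m * F i)))).
  2:{ intros i _. rewrite (rsum_ext 3 n (fun m => alpha lam m * A m * (delta i (S m) * F i) - alpha lam m * B m * (delta i m * F i)) (fun m => alpha lam m * (A m * delta i (S m) - B m * delta i m) * F i)) by (intros; ring).
      rewrite rsum_mult_r. ring. }
  rewrite rsum_plus, rsum_plus.
  rewrite (rsum_scal 1 N lam), (rsum_scal 1 N s).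
  rewrite (rsum_delta 1 N a) by (unfold N; lia). rewrite (rsum_delta 1 N b) by (unfold N; lia).
  rewrite rsum_swap. f_equal. f_equal. apply rsum_ext. intros m Hm.
  rewrite rsum_minus, (rsum_scal 1 N (alpha lam m * A m)), (rsum_scal 1 N (alpha lam m * B m)).
  rewrite (rsum_delta 1 N (S m)) by (unfold N, n in *; lia). rewrite (rsum_delta 1 N m) by (unfold N, n in *; lia).
  ring. Qed.
Lemma upd0 x q : upd x q 0 = x.
Proof. apply functional_extensionality; intro j. unfold upd. destruct (Nat.eqb j q) eqn:E; [apply Nat.eqb_eq in E; subst; ring|reflexivity]. Qed.

Lemma LH k u v lam x q : (2 <= k)%nat -> smooth (2*k+1) u -> smooth (2*k+1) v ->
  (forall x : point,
      pd 1 u x + pd 2 v x =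
      sum_from_to 2 k (fun s =>
        pd (2 * s - 1) u x * pd (2 * s) v x - pd (2 * s) u x * pd (2 * s - 1) v x)) ->
  (forall x : point,
      pd 2 u x + pd 3 v x =
      sum_from_to 2 k (fun s =>
        pd (2 * s) u x * pd (2 * s + 1) v x - pd (2 * s + 1) u x * pd (2 * s) v x)) ->
  (1 <= q <= 2*k+1)%nat ->
  (pd q (pd 1 u) x + pd q (pd 2 v) x - sum_from_to 2 k (fun s =>
      pd q (pd (2*s-1) u) x * pd (2*s) v x + pd (2*s-1) u x * pd q (pd (2*s) v) x
      - (pd q (pd (2*s) u) x * pd (2*s-1) v x + pd (2*s) u x * pd q (pd (2*s-1) v) x)))
  + lam * (pd q (pd 2 u) x + pd q (pd 3 v) x - sum_from_to 2 k (fun s =>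
      pd q (pd (2*s) u) x * pd (2*s+1) v x + pd (2*s) u x * pd q (pd (2*s+1) v) x
      - (pd q (pd (2*s+1) u) x * pd (2*s) v x + pd (2*s+1) u x * pd q (pd (2*s) v) x))) = 0.
Proof. intros hk hu hv h1 h2 Hq.
  set (H := fun y => (pd 1 u y + pd 2 v y - sum_from_to 2 k (fun s =>
        pd (2 * s - 1) u y * pd (2 * s) v y - pd (2 * s) u y * pd (2 * s - 1) v y))
     + lam * (pd 2 u y + pd 3 v y - sum_from_to 2 k (fun s =>
        pd (2 * s) u y * pd (2 * s + 1) v y - pd (2 * s + 1) u y * pd (2 * s) v y))).
  assert (HZ : (fun t => H (upd x q t)) = (fun _ => 0)).
  { apply functional_extensionality; intro t. unfold H. rewrite h1, h2. ring. }
  assert (HD : derivable_pt_lim (fun t => H (upd x q t)) 0 (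
  (pd q (pd 1 u) x + pd q (pd 2 v) x - sum_from_to 2 k (fun s =>
      pd q (pd (2*s-1) u) x * pd (2*s) v x + pd (2*s-1) u x * pd q (pd (2*s) v) x
      - (pd q (pd (2*s) u) x * pd (2*s-1) v x + pd (2*s) u x * pd q (pd (2*s-1) v) x)))
  + lam * (pd q (pd 2 u) x + pd q (pd 3 v) x - sum_from_to 2 k (fun s =>
      pd q (pd (2*s) u) x * pd (2*s+1) v x + pd (2*s) u x * pd q (pd (2*s+1) v) x
      - (pd q (pd (2*s+1) u) x * pd (2*s) v x + pd (2*s+1) u x * pd q (pd (2*s) v) x))))).
  { unfold H, sum_from_to. eapply der_eq. apply dplus.
    - apply dminus. apply dplus; apply (dpd (2*k+1)); auto; lia.
      apply (drsum _ _ _ (fun s =>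
      pd q (pd (2*s-1) u) x * pd (2*s) v x + pd (2*s-1) u x * pd q (pd (2*s) v) x
      - (pd q (pd (2*s) u) x * pd (2*s-1) v x + pd (2*s) u x * pd q (pd (2*s-1) v) x))).
      intros s Hs. eapply der_eq. apply dminus; apply dmult; apply (dpd (2*k+1)); auto; lia.
      cbv beta. rewrite upd0. ring.
    - apply dmult. apply dconst. apply dminus. apply dplus; apply (dpd (2*k+1)); auto; lia.
      apply (drsum _ _ _ (fun s =>
      pd q (pd (2*s) u) x * pd (2*s+1) v x + pd (2*s) u x * pd q (pd (2*s+1) v) x
      - (pd q (pd (2*s+1) u) x * pd (2*s) v x + pd (2*s+1) u x * pd q (pd (2*s) v) x))).
      intros s Hs. eapply der_eq. apply dminus; apply dmult; apply (dpd (2*k+1)); auto; lia.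
      cbv beta. rewrite upd0. ring.
    - cbv beta. ring. }
  rewrite HZ in HD. symmetry. exact (uniqueness_limite _ _ _ _ (dconst 0) HD).
Qed.
Theorem mainTheorem7 (k : nat) (hk : (2 <= k)%nat)
  (u v : point -> R)
  (hu : smooth (2 * k + 1) u) (hv : smooth (2 * k + 1) v)
  (h1 : forall x : point,
      pd 1 u x + pd 2 v x =
      sum_from_to 2 k (fun s =>
        pd (2 * s - 1) u x * pd (2 * s) v x - pd (2 * s) u x * pd (2 * s - 1) v x))
  (h2 : forall x : point,
      pd 2 u x + pd 3 v x =
      sum_from_to 2 k (fun s =>
        pd (2 * s) u x * pd (2 * s + 1) v x - pd (2 * s + 1) u x * pd (2 * s) v x)) :
  forall (lam : R) (j : nat) (x : point), (1 <= j <= 2 * k + 1)%nat ->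
    bracket (2 * k + 1) (Xf k u lam) (Yf k v lam) j x = 0.
Proof.
  intros lam j x Hj.
  assert (eqX : forall i, Xf k u lam i = fun y => (delta i 2 + lam * delta i 3) + (-1) * sum_from_to 3 (2*k) (fun m => alpha lam m * (pd m u y * delta i (S m) - pd (S m) u y * delta i m))).
  { intro i; apply functional_extensionality; intro y; unfold Xf; ring. }
  assert (eqY : forall i, Yf k v lam i = fun y => (delta i 1 + lam * delta i 2) + 1 * sum_from_to 3 (2*k) (fun m => alpha lam m * (pd m v y * delta i (S m) - pd (S m) v y * delta i m))).
  { intro i; apply functional_extensionality; intro y; unfold Yf; ring. }
  set (W := fun q => sum_from_to 1 (2*k+1) (fun i => Xf k u lam i x * pd i (pd q v) x + Yf k v lam i x * pd i (pd q u) x)).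
  assert (HW : forall q, (1 <= q <= 2*k+1)%nat -> W q = 0).
  { intros q Hq. unfold W.
    assert (E1 : sum_from_to 1 (2*k+1) (fun i => Xf k u lam i x * pd i (pd q v) x + Yf k v lam i x * pd i (pd q u) x)
      = sum_from_to 1 (2*k+1) (fun i => (delta i 2 + lam * delta i 3 + (-1) * sum_from_to 3 (2*k) (fun m => alpha lam m * (pd m u x * delta i (S m) - pd (S m) u x * delta i m))) * pd q (pd i v) x)
      + sum_from_to 1 (2*k+1) (fun i => (delta i 1 + lam * delta i 2 + 1 * sum_from_to 3 (2*k) (fun m => alpha lam m * (pd m v x * delta i (S m) - pd (S m) v x * delta i m))) * pd q (pd i u) x)).
    { unfold sum_from_to at 1 2 4. rewrite <- rsum_plus. apply rsum_ext. intros i Hi.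
      rewrite (schwarz_pd (2*k+1) v i q x), (schwarz_pd (2*k+1) u i q x) by (auto; lia).
      rewrite eqX, eqY. reflexivity. }
    rewrite E1, !LC by lia.
    assert (E2 := sum_oddeven lam (fun m => pd q (pd m u) x * pd (S m) v x + pd m u x * pd q (pd (S m) v) x
      - (pd q (pd (S m) u) x * pd m v x + pd (S m) u x * pd q (pd m v) x)) k ltac:(lia)).
    cbv beta in E2.
    assert (E3 : sum_from_to 2 k (fun s => pd q (pd (2*s-1) u) x * pd (S (2*s-1)) v x + pd (2*s-1) u x * pd q (pd (S (2*s-1)) v) x
      - (pd q (pd (S (2*s-1)) u) x * pd (2*s-1) v x + pd (S (2*s-1)) u x * pd q (pd (2*s-1) v) x))
      = sum_from_to 2 k (fun s =>
      pd q (pd (2*s-1) u) x * pd (2*s) v x + pd (2*s-1) u x * pd q (pd (2*s) v) x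
      - (pd q (pd (2*s) u) x * pd (2*s-1) v x + pd (2*s) u x * pd q (pd (2*s-1) v) x))).
    { unfold sum_from_to. apply rsum_ext. intros s Hs. replace (S (2*s-1)) with (2*s)%nat by lia. reflexivity. }
    assert (E4 : sum_from_to 2 k (fun s => pd q (pd (2*s) u) x * pd (S (2*s)) v x + pd (2*s) u x * pd q (pd (S (2*s)) v) x
      - (pd q (pd (S (2*s)) u) x * pd (2*s) v x + pd (S (2*s)) u x * pd q (pd (2*s) v) x))
      = sum_from_to 2 k (fun s =>
      pd q (pd (2*s) u) x * pd (2*s+1) v x + pd (2*s) u x * pd q (pd (2*s+1) v) x
      - (pd q (pd (2*s+1) u) x * pd (2*s) v x + pd (2*s+1) u x * pd q (pd (2*s) v) x))).
    { unfold sum_from_to. apply rsum_ext. intros s Hs. replace (S (2*s)) with (2*s+1)%nat by lia. reflexivity. }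
    rewrite E3, E4 in E2.
    assert (E5 : sum_from_to 3 (2*k) (fun m => alpha lam m * (pd q (pd m u) x * pd (S m) v x + pd m u x * pd q (pd (S m) v) x
      - (pd q (pd (S m) u) x * pd m v x + pd (S m) u x * pd q (pd m v) x)))
      = sum_from_to 3 (2*k) (fun m => alpha lam m * (pd m u x * pd q (pd (S m) v) x - pd (S m) u x * pd q (pd m v) x))
      - sum_from_to 3 (2*k) (fun m => alpha lam m * (pd m v x * pd q (pd (S m) u) x - pd (S m) v x * pd q (pd m u) x))).
    { unfold sum_from_to. rewrite <- rsum_minus. apply rsum_ext. intros; ring. }
    assert (HL := LH k u v lam x q hk hu hv h1 h2 Hq).
    rewrite E5 in E2. nra. }
  assert (HB : bracket (2*k+1) (Xf k u lam) (Yf k v lam) j x =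
     sum_from_to 3 (2*k) (fun m => alpha lam m * (delta j (S m) * W m - delta j m * W (S m)))).
  { unfold bracket, vapp, W, sum_from_to.
    transitivity (rsum 1 (S (2*k+1) - 1) (fun i => rsum 3 (S (2*k) - 3) (fun m =>
      alpha lam m * (delta j (S m) * (Xf k u lam i x * pd i (pd m v) x + Yf k v lam i x * pd i (pd m u) x)
                   - delta j m * (Xf k u lam i x * pd i (pd (S m) v) x + Yf k v lam i x * pd i (pd (S m) u) x))))).
    - rewrite <- rsum_minus. apply rsum_ext. intros i Hi.
      rewrite (eqY j), (eqX j).
      rewrite (LA (2*k+1) k v lam j _ 1 x i) by (auto; lia).
      rewrite (LA (2*k+1) k u lam j _ (-1) x i) by (auto; lia).
      unfold sum_from_to.
      rewrite (rsum_ext 3 (S (2*k) - 3) (fun m =>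
      alpha lam m * (delta j (S m) * (Xf k u lam i x * pd i (pd m v) x + Yf k v lam i x * pd i (pd m u) x)
                   - delta j m * (Xf k u lam i x * pd i (pd (S m) v) x + Yf k v lam i x * pd i (pd (S m) u) x))) (fun m => Xf k u lam i x * (alpha lam m * (pd i (pd m v) x * delta j (S m) - pd i (pd (S m) v) x * delta j m))
         + Yf k v lam i x * (alpha lam m * (pd i (pd m u) x * delta j (S m) - pd i (pd (S m) u) x * delta j m)))) by (intros; ring).
      rewrite rsum_plus, (rsum_scal 3 _ (Xf k u lam i x)), (rsum_scal 3 _ (Yf k v lam i x)). ring.
    - rewrite rsum_swap. apply rsum_ext. intros m Hm.
      rewrite <- (rsum_scal 1 _ (delta j (S m))), <- (rsum_scal 1 _ (delta j m)), <- rsum_minus, <- rsum_scal.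
      apply rsum_ext; intros; ring. }
  rewrite HB. unfold sum_from_to. rewrite (rsum_ext _ _ _ (fun _ => 0)). apply rsum_zero.
  intros m Hm. rewrite !HW by lia. ring.
Qed.
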